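(* Let $a,x,y\in(0,1)$ with $ay<x$, and let $W_{(\alpha,\beta)}(a,x,y)=(T_1,T_2)$ be the 2-variable weighted shift defined below. Then the operator matrix $L=\begin{pmatrix} T_1^*T_1 & T_2^*T_1\\ T_1^*T_2 & T_2^*T_2\end{pmatrix}$ is positive.
   Context: A 2-variable weighted shift $(T_1,T_2)$ on $\ell^2(\mathbb{Z}_+^2)$ (orthonormal basis $\{e_{\mathbf{k}}\}$) is given by $T_1e_{\mathbf{k}}=\alpha_{\mathbf{k}}e_{\mathbf{k}+(1,0)}$, $T_2e_{\mathbf{k}}=\beta_{\mathbf{k}}e_{\mathbf{k}+(0,1)}$. $W_{(\alpha,\beta)}(a,x,y)$ is the one with $\alpha_{(0,0)}=x$, $\alpha_{(0,k_2)}=a$ for $k_2\ge1$, $\alpha_{(k_1,k_2)}=1$ for $k_1\ge1$; $\beta_{(0,0)}=y$, $\beta_{(k_1,0)}=ay/x$ for $k_1\ge1$, $\beta_{(k_1,k_2)}=1$ for $k_2\ge1$. $L$ acts on $\ell^2(\mathbb{Z}_+^2)\oplus\ell^2(\mathbb{Z}_+^2)$. *)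

(* Defs.v *)
From Stdlib Require Import Reals.
From Coquelicot Require Import Coquelicot.
Open Scope R_scope.

Definition vec := nat -> nat -> C.

Definition alpha (a x y : R) (k1 k2 : nat) : R :=
  match k1, k2 with
  | S _, _ => 1
  | O, S _ => a
  | O, O => x
  end.

Definition beta (a x y : R) (k1 k2 : nat) : R :=
  match k1, k2 with
  | _, S _ => 1
  | S _, O => a * y / x
  | O, O => y
  end.

(** T1 e_k = alpha_k e_{k+(1,0)},  T2 e_k = beta_k e_{k+(0,1)}. *)
Definition T1 a x y (u : vec) : vec := fun k1 k2 =>
  match k1 with O => RtoC 0 | S j => Cmult (RtoC (alpha a x y j k2)) (u j k2) end.
Definition T2 a x y (u : vec) : vec := fun k1 k2 =>
  match k2 with O => RtoC 0 | S j => Cmult (RtoC (beta a x y k1 j)) (u k1 j) end.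

(** Adjoints (the weights are real): T1^* e_k = alpha_{k-(1,0)} e_{k-(1,0)}
    (and 0 if k1 = 0), i.e. (T1^* u)(k) = conj(alpha_k) u(k+(1,0)). *)
Definition T1adj a x y (u : vec) : vec := fun k1 k2 =>
  Cmult (Cconj (RtoC (alpha a x y k1 k2))) (u (S k1) k2).
Definition T2adj a x y (u : vec) : vec := fun k1 k2 =>
  Cmult (Cconj (RtoC (beta a x y k1 k2))) (u k1 (S k2)).

Definition vadd (u v : vec) : vec := fun k1 k2 => Cplus (u k1 k2) (v k1 k2).

Definition Lop a x y (h : vec * vec) : vec * vec :=
  (vadd (T1adj a x y (T1 a x y (fst h))) (T2adj a x y (T1 a x y (snd h))),
   vadd (T1adj a x y (T2 a x y (fst h))) (T2adj a x y (T2 a x y (snd h)))).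

Fixpoint csum (n : nat) (F : nat -> C) : C :=
  match n with O => RtoC 0 | S m => Cplus (csum m F) (F m) end.
Fixpoint rsum (n : nat) (F : nat -> R) : R :=
  match n with O => 0 | S m => rsum m F + F m end.

(** u is in l^2(Z_+^2): sum_k |u_k|^2 < oo (nonnegative terms, so bounded
    partial sums over the exhausting squares [0,N)^2). *)
Definition ell2 (u : vec) : Prop :=
  exists M : R, forall N : nat,
    rsum N (fun i => rsum N (fun j => (Cmod (u i j)) ^ 2)) <= M.

Definition ip_partial (N : nat) (h k : vec * vec) : C :=
  Cplus (csum N (fun i => csum N (fun j => Cmult (fst h i j) (Cconj (fst k i j)))))
        (csum N (fun i => csum N (fun j => Cmult (snd h i j) (Cconj (snd k i j))))).

Definition is_inner (h k : vec * vec) (c : C) : Prop :=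
  filterlim (fun N => ip_partial N h k) eventually (locally c).

Definition positive_L a x y : Prop :=
  forall f g : vec, ell2 f -> ell2 g ->
    exists c : C, is_inner (Lop a x y (f, g)) (f, g) c /\ Im c = 0 /\ 0 <= Re c.

(* Main.v *)
Require Import Defs.
From Stdlib Require Import Reals Lra Lia Psatz.
From Coquelicot Require Import Coquelicot.
Open Scope R_scope.

Lemma rsum_ext n F G : (forall i, F i = G i) -> rsum n F = rsum n G.
Proof. intro H; induction n; simpl; [reflexivity| rewrite IHn, H; reflexivity]. Qed.
Lemma rsum_plus n F G : rsum n (fun i => F i + G i) = rsum n F + rsum n G.
Proof. induction n; simpl; [lra| rewrite IHn; lra]. Qed.
Lemma rsum_minus n F G : rsum n (fun i => F i - G i) = rsum n F - rsum n G.
Proof. induction n; simpl; [lra| rewrite IHn; lra]. Qed.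
Lemma rsum_zero n : rsum n (fun _ => 0) = 0.
Proof. induction n; simpl; [lra| rewrite IHn; lra]. Qed.
Lemma rsum_le n F G : (forall i, F i <= G i) -> rsum n F <= rsum n G.
Proof. intro H; induction n; simpl; [lra| specialize (H n); lra]. Qed.
Lemma rsum_nonneg n F : (forall i, 0 <= F i) -> 0 <= rsum n F.
Proof. intro H; induction n; simpl; [lra| specialize (H n); lra]. Qed.
Lemma rsum_mono_n n m F : (forall i, 0 <= F i) -> (n <= m)%nat -> rsum n F <= rsum m F.
Proof. intros H Hnm; induction Hnm; simpl; [lra| specialize (H m); lra]. Qed.
Lemma rsum_shift n F : rsum (S n) F = F 0%nat + rsum n (fun i => F (S i)).
Proof. induction n; simpl in *; [lra| rewrite IHn; lra]. Qed.
Lemma rsum_abs n F : Rabs (rsum n F) <= rsum n (fun i => Rabs (F i)).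
Proof. induction n; simpl; [rewrite Rabs_R0; lra|].
  eapply Rle_trans; [apply Rabs_triang| lra]. Qed.
Lemma rsum_pred n F : (forall i, 0 <= F i) -> rsum n (fun i => F (pred i)) <= 2 * rsum n F.
Proof. intro H. destruct n; [simpl; lra|].
  rewrite (rsum_shift n (fun i => F (pred i))). cbv beta. simpl pred.
  assert (rsum n F <= rsum (S n) F) by (apply rsum_mono_n; auto).
  rewrite (rsum_shift n F) in *. assert (0 <= F 0%nat) by auto.
  assert (0 <= rsum n (fun i => F (S i))) by (apply rsum_nonneg; auto).
  change (rsum n (fun i => F i)) with (rsum n F). lra. Qed.

Definition sq n (h : nat -> nat -> R) := rsum n (fun p => rsum n (fun q => h p q)).

Lemma sq_S n h : sq (S n) h = sq n h + rsum n (fun q => h n q) + rsum (S n) (fun p => h p n).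
Proof. unfold sq.
  rewrite (rsum_ext (S n) (fun p => rsum (S n) (fun q => h p q))
     (fun p => rsum n (fun q => h p q) + h p n)) by (intro; reflexivity).
  rewrite rsum_plus.
  change (rsum (S n) (fun p => rsum n (fun q => h p q))) with
    (rsum n (fun p => rsum n (fun q => h p q)) + rsum n (fun q => h n q)). lra. Qed.

Lemma sq_le n h k : (forall p q, h p q <= k p q) -> sq n h <= sq n k.
Proof. intro H. unfold sq. apply rsum_le; intro; apply rsum_le; auto. Qed.
Lemma sq_nonneg n h : (forall p q, 0 <= h p q) -> 0 <= sq n h.
Proof. intro H. unfold sq. apply rsum_nonneg; intro; apply rsum_nonneg; auto. Qed.
Lemma sq_incr n h : (forall p q, 0 <= h p q) -> sq n h <= sq (S n) h.
Proof. intro H. rewrite sq_S.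
  assert (0 <= rsum n (fun q => h n q)) by (apply rsum_nonneg; auto).
  assert (0 <= rsum (S n) (fun p => h p n)) by (apply rsum_nonneg; auto). lra. Qed.
Lemma sq_plus n h k : sq n (fun p q => h p q + k p q) = sq n h + sq n k.
Proof. unfold sq. rewrite <- rsum_plus. apply rsum_ext; intro. apply rsum_plus. Qed.
Lemma sq_minus n h k : sq n (fun p q => h p q - k p q) = sq n h - sq n k.
Proof. unfold sq. rewrite <- rsum_minus. apply rsum_ext; intro. apply rsum_minus. Qed.

Lemma sq_shift_a n h : (forall p q, 0 <= h p q) ->
  sq n (fun p q => h (pred p) (S q)) <= 2 * sq (S n) h.
Proof. intro H. unfold sq.
  apply Rle_trans with (rsum n (fun p => rsum (S n) (fun q => h (pred p) q))).
  { apply rsum_le; intro p. rewrite (rsum_shift n). specialize (H (pred p) 0%nat). lra. }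
  apply Rle_trans with (2 * rsum n (fun p => rsum (S n) (fun q => h p q))).
  { apply (rsum_pred n (fun p => rsum (S n) (fun q => h p q))). intro; apply rsum_nonneg; auto. }
  assert (rsum n (fun p => rsum (S n) (fun q => h p q)) <= rsum (S n) (fun p => rsum (S n) (fun q => h p q))).
  { apply rsum_mono_n; auto. intro; apply rsum_nonneg; auto. }
  lra. Qed.

Lemma sq_shift_b n h : (forall p q, 0 <= h p q) ->
  sq n (fun p q => h (S p) (pred q)) <= 2 * sq (S n) h.
Proof. intro H. unfold sq.
  apply Rle_trans with (rsum n (fun p => 2 * rsum (S n) (fun q => h (S p) q))).
  { apply rsum_le; intro p.
    eapply Rle_trans. apply (rsum_pred n (fun q => h (S p) q)). intro; auto.
    assert (rsum n (fun q => h (S p) q) <= rsum (S n) (fun q => h (S p) q)) by (apply rsum_mono_n; auto).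
    lra. }
  rewrite (rsum_ext n _ (fun p => rsum (S n) (fun q => h (S p) q) + rsum (S n) (fun q => h (S p) q))) by (intro; lra).
  rewrite rsum_plus.
  rewrite (rsum_shift n (fun p => rsum (S n) (fun q => h p q))).
  assert (0 <= rsum (S n) (fun q => h 0%nat q)) by (apply rsum_nonneg; auto).
  lra. Qed.

Lemma abs_conv (r : nat -> nat -> R) M :
  (forall N, sq N (fun p q => Rabs (r p q)) <= M) -> ex_finite_lim_seq (fun N => sq N r).
Proof. intro H.
  assert (E1 : ex_finite_lim_seq (fun N => sq N (fun p q => Rabs (r p q) + r p q))).
  { apply ex_finite_lim_seq_incr with (2*M).
    - intro; apply sq_incr; intros; pose proof (Rle_abs (- r p q)); rewrite Rabs_Ropp in *; lra.
    - intro n. eapply Rle_trans; [apply sq_le with (k := fun p q => 2 * Rabs (r p q))|].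
      + intros; pose proof (Rle_abs (r p q)); lra.
      + specialize (H n).
        replace (sq n (fun p q => 2 * Rabs (r p q))) with
          (sq n (fun p q => Rabs (r p q) + Rabs (r p q))).
        * rewrite sq_plus. lra.
        * unfold sq; apply rsum_ext; intro; apply rsum_ext; intro; lra. }
  assert (E2 : ex_finite_lim_seq (fun N => sq N (fun p q => Rabs (r p q)))).
  { apply ex_finite_lim_seq_incr with M; auto.
    intro; apply sq_incr; intros; apply Rabs_pos. }
  destruct E1 as [l1 H1], E2 as [l2 H2].
  exists (l1 - l2).
  eapply is_lim_seq_ext; [| apply (is_lim_seq_minus' _ _ _ _ H1 H2)].
  intro n. simpl. rewrite <- sq_minus. unfold sq. apply rsum_ext; intro; apply rsum_ext; intro; lra.
Qed.

Lemma L_X2 K (Dg : nat -> nat -> R) :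
  sq (S K) (fun p q => match p with O => 0 | S i => Dg i q end) = sq K Dg + rsum K (fun i => Dg i K).
Proof. unfold sq. rewrite rsum_shift. cbv beta iota.
  rewrite rsum_zero.
  rewrite (rsum_ext K (fun i => rsum (S K) (fun q => Dg i q)) (fun i => rsum K (fun q => Dg i q) + Dg i K)) by (intro; reflexivity).
  rewrite rsum_plus. lra. Qed.

Lemma L_X3 K (Dg : nat -> nat -> R) :
  sq (S K) (fun p q => match q with O => 0 | S m => Dg p m end) = sq K Dg + rsum K (fun m => Dg K m).
Proof. unfold sq.
  rewrite (rsum_ext (S K) _ (fun p => rsum K (fun m => Dg p m))).
  - reflexivity.
  - intro p. rewrite rsum_shift. cbv beta iota. lra. Qed.

Definition Dl h K := sq (S K) h - sq K h.

Lemma Dl_eq h K : Dl h K = rsum K (fun q => h K q) + rsum (S K) (fun p => h p K).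
Proof. unfold Dl. rewrite sq_S. lra. Qed.


Lemma B1 (h : nat -> nat -> R) (hpos : forall p q, 0 <= h p q) K : rsum K (fun i => h i (S K)) <= Dl h (S K).
Proof. rewrite Dl_eq.
  assert (rsum K (fun i => h i (S K)) <= rsum (S (S K)) (fun p => h p (S K))) by (apply rsum_mono_n; auto).
  assert (0 <= rsum (S K) (fun q => h (S K) q)) by (apply rsum_nonneg; auto). lra. Qed.
Lemma B2 (h : nat -> nat -> R) (hpos : forall p q, 0 <= h p q) K : rsum K (fun i => h (S i) K) <= Dl h K.
Proof. rewrite Dl_eq. rewrite (rsum_shift K (fun p => h p K)).
  assert (0 <= rsum K (fun q => h K q)) by (apply rsum_nonneg; auto).
  specialize (hpos 0%nat K). lra. Qed.
Lemma B3 (h : nat -> nat -> R) (hpos : forall p q, 0 <= h p q) K : rsum K (fun m => h K (S m)) <= Dl h K.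
Proof. rewrite Dl_eq.
  pose proof (rsum_shift K (fun q => h K q)) as E. simpl in E.
  change (rsum (S K) (fun q => h K q)) with (rsum K (fun q => h K q) + h K K) in E.
  change (rsum (S K) (fun p => h p K)) with (rsum K (fun p => h p K) + h K K).
  assert (0 <= rsum K (fun p => h p K)) by (apply rsum_nonneg; auto).
  specialize (hpos K 0%nat). lra. Qed.
Lemma B4 (h : nat -> nat -> R) (hpos : forall p q, 0 <= h p q) K : rsum K (fun m => h (S K) m) <= Dl h (S K).
Proof. rewrite Dl_eq.
  assert (rsum K (fun m => h (S K) m) <= rsum (S K) (fun m => h (S K) m)) by (apply rsum_mono_n; auto).
  assert (0 <= rsum (S (S K)) (fun p => h p (S K))) by (apply rsum_nonneg; auto). lra. Qed.

Lemma Dl_lim (h : nat -> nat -> R) (hpos : forall p q, 0 <= h p q) M : (forall N, sq N h <= M) -> is_lim_seq (Dl h) 0.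
Proof. intro HM.
  destruct (ex_finite_lim_seq_incr (fun N => sq N h) M) as [l Hl].
  - intro; apply sq_incr; auto.
  - auto.
  - unfold Dl. replace 0 with (l - l) by ring.
    apply is_lim_seq_minus'; auto.
    apply (is_lim_seq_incr_1 (fun N => sq N h)). auto. Qed.

Definition hf (f : vec) p q := Cmod (f p q) ^ 2.
Definition cc a x y i m := alpha a x y i (S m) * beta a x y (S i) m.
Definition DD a x y (f g : vec) i m := cc a x y i m *
  (Re (g i (S m)) * Re (f (S i) m) + Im (g i (S m)) * Im (f (S i) m)).
Definition EE a x y (f g : vec) i m := cc a x y i m *
  (Im (g i (S m)) * Re (f (S i) m) - Re (g i (S m)) * Im (f (S i) m)).
Definition rho a x y f g p q :=
  alpha a x y p q ^ 2 * hf f p q + beta a x y p q ^ 2 * hf g p q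
  + match p with O => 0 | S i => DD a x y f g i q end
  + match q with O => 0 | S m => DD a x y f g p m end.
Definition iota a x y f g p q :=
  match p with O => 0 | S i => EE a x y f g i q end
  - match q with O => 0 | S m => EE a x y f g p m end.

Lemma Re_csum n F : Re (csum n F) = rsum n (fun i => Re (F i)).
Proof. induction n; simpl; [reflexivity|]. rewrite <- IHn. reflexivity. Qed.
Lemma Im_csum n F : Im (csum n F) = rsum n (fun i => Im (F i)).
Proof. induction n; simpl; [reflexivity|]. rewrite <- IHn. reflexivity. Qed.

Lemma Re_ip a x y f g N : Re (ip_partial N (Lop a x y (f, g)) (f, g)) = sq N (rho a x y f g).
Proof.
  unfold ip_partial. change (Re (Cplus ?u ?v)) with (Re u + Re v).
  rewrite !Re_csum. unfold sq. rewrite <- rsum_plus. apply rsum_ext; intro p.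
  rewrite !Re_csum. rewrite <- rsum_plus. apply rsum_ext; intro q.
  unfold rho, hf, DD, cc. rewrite !Cmod2_alt.
  unfold Lop, vadd, T1adj, T2adj, T1, T2; simpl fst; simpl snd.
  destruct p, q; unfold Re, Im, Cmult, Cplus, Cconj, RtoC; simpl; ring.
Qed.

Lemma Im_ip a x y f g N : Im (ip_partial N (Lop a x y (f, g)) (f, g)) = sq N (iota a x y f g).
Proof.
  unfold ip_partial. change (Im (Cplus ?u ?v)) with (Im u + Im v).
  rewrite !Im_csum. unfold sq. rewrite <- rsum_plus. apply rsum_ext; intro p.
  rewrite !Im_csum. rewrite <- rsum_plus. apply rsum_ext; intro q.
  unfold iota, EE, cc.
  unfold Lop, vadd, T1adj, T2adj, T1, T2; simpl fst; simpl snd.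
  destruct p, q; unfold Re, Im, Cmult, Cplus, Cconj, RtoC; simpl; ring.
Qed.


Lemma w_alpha (a x y : R) (Ha : 0 < a < 1) (Hx : 0 < x < 1) (Hy : 0 < y < 1) (Hayx : a * y < x) i m : 0 <= alpha a x y i m <= 1.
Proof. destruct i, m; simpl; lra. Qed.
Lemma w_beta (a x y : R) (Ha : 0 < a < 1) (Hx : 0 < x < 1) (Hy : 0 < y < 1) (Hayx : a * y < x) i m : 0 <= beta a x y i m <= 1.
Proof. destruct i, m; simpl; try lra.
  pose proof (Rinv_0_lt_compat x (proj1 Hx)).
  assert (E : a * y / x * x = a * y) by (field; lra).
  unfold Rdiv in *. split; nra. Qed.
Lemma w_cc (a x y : R) (Ha : 0 < a < 1) (Hx : 0 < x < 1) (Hy : 0 < y < 1) (Hayx : a * y < x) i m : 0 <= cc a x y i m <= 1.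
Proof. unfold cc. pose proof (w_alpha a x y Ha Hx Hy Hayx i (S m)). pose proof (w_beta a x y Ha Hx Hy Hayx (S i) m). nra. Qed.

Lemma hf_pos (f : vec) p q : 0 <= hf f p q.
Proof. unfold hf. apply pow2_ge_0. Qed.


Lemma DD_abs (a x y : R) (Ha : 0 < a < 1) (Hx : 0 < x < 1) (Hy : 0 < y < 1) (Hayx : a * y < x) (f g : vec) i m : Rabs (DD a x y f g i m) <= hf g i (S m) + hf f (S i) m.
Proof. unfold DD, hf. rewrite !Cmod2_alt. pose proof (w_cc a x y Ha Hx Hy Hayx i m) as [c0 c1].
  rewrite Rabs_mult, (Rabs_pos_eq _ c0).
  set (u1 := Re (g i (S m))). set (u2 := Im (g i (S m))).
  set (v1 := Re (f (S i) m)). set (v2 := Im (f (S i) m)).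
  assert (Rabs (u1 * v1 + u2 * v2) <= u1^2+u2^2+v1^2+v2^2).
  { pose proof (pow2_ge_0 (u1+v1)); pose proof (pow2_ge_0 (u1-v1)).
    pose proof (pow2_ge_0 (u2+v2)); pose proof (pow2_ge_0 (u2-v2)).
    pose proof (pow2_ge_0 (u2+v1)); pose proof (pow2_ge_0 (u2-v1)).
    pose proof (pow2_ge_0 (u1+v2)); pose proof (pow2_ge_0 (u1-v2)).
    apply Rabs_le. split; nra. }
  pose proof (Rabs_pos (u1 * v1 + u2 * v2)). nra. Qed.

Lemma EE_abs (a x y : R) (Ha : 0 < a < 1) (Hx : 0 < x < 1) (Hy : 0 < y < 1) (Hayx : a * y < x) (f g : vec) i m : Rabs (EE a x y f g i m) <= hf g i (S m) + hf f (S i) m.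
Proof. unfold EE, hf. rewrite !Cmod2_alt. pose proof (w_cc a x y Ha Hx Hy Hayx i m) as [c0 c1].
  rewrite Rabs_mult, (Rabs_pos_eq _ c0).
  set (u1 := Re (g i (S m))). set (u2 := Im (g i (S m))).
  set (v1 := Re (f (S i) m)). set (v2 := Im (f (S i) m)).
  assert (Rabs (u2 * v1 - u1 * v2) <= u1^2+u2^2+v1^2+v2^2).
  { pose proof (pow2_ge_0 (u1+v1)); pose proof (pow2_ge_0 (u1-v1)).
    pose proof (pow2_ge_0 (u2+v2)); pose proof (pow2_ge_0 (u2-v2)).
    pose proof (pow2_ge_0 (u2+v1)); pose proof (pow2_ge_0 (u2-v1)).
    pose proof (pow2_ge_0 (u1+v2)); pose proof (pow2_ge_0 (u1-v2)).
    apply Rabs_le. split; nra. }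
  pose proof (Rabs_pos (u2 * v1 - u1 * v2)). nra. Qed.

Lemma DD_pos (a x y : R) (Ha : 0 < a < 1) (Hx : 0 < x < 1) (Hy : 0 < y < 1) (Hayx : a * y < x) (f g : vec) i m : 0 <= hf f (S i) m + hf g i (S m) + 2 * DD a x y f g i m.
Proof. unfold DD, hf. rewrite !Cmod2_alt. pose proof (w_cc a x y Ha Hx Hy Hayx i m) as [c0 c1].
  revert c0 c1. generalize (cc a x y i m) as c. intros c c0 c1.
  generalize (Re (g i (S m))) (Im (g i (S m))) (Re (f (S i) m)) (Im (f (S i) m)).
  intros u1 u2 v1 v2.
  replace (Re (v1, v2) ^ 2 + Im (v1, v2) ^ 2) with (v1^2+v2^2) by reflexivity.
  match goal with |- 0 <= ?G => replace G with ((v1 + c*u1)^2 + (v2 + c*u2)^2 + (1 - c^2) * (u1^2+u2^2)) by ring end.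
  assert (c*c <= 1*1) by (apply Rmult_le_compat; lra).
  assert (0 <= 1 - c^2) by (replace (c^2) with (c*c) by ring; lra).
  pose proof (pow2_ge_0 (v1 + c*u1)).
  pose proof (pow2_ge_0 (v2 + c*u2)). pose proof (pow2_ge_0 u1). pose proof (pow2_ge_0 u2).
  assert (0 <= (1 - c^2) * (u1^2+u2^2)) by (apply Rmult_le_pos; lra). lra. Qed.

Lemma beta_S1 (a x y : R) i m : beta a x y i (S m) = 1.
Proof. destruct i; reflexivity. Qed.

Lemma U_lb (a x y : R) (f g : vec) K :
  sq K (fun i m => hf f (S i) m) + sq K (fun i m => hf g i (S m)) <=
  sq (S K) (fun p q => alpha a x y p q ^ 2 * hf f p q + beta a x y p q ^ 2 * hf g p q).
Proof. rewrite sq_plus. apply Rplus_le_compat.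
  - unfold sq. rewrite rsum_shift. cbv beta.
    assert (0 <= rsum (S K) (fun q => alpha a x y 0 q ^ 2 * hf f 0 q)).
    { apply rsum_nonneg; intro. pose proof (hf_pos f 0%nat i). pose proof (pow2_ge_0 (alpha a x y 0 i)). nra. }
    assert (rsum K (fun i => rsum K (fun m => hf f (S i) m)) <=
            rsum K (fun i => rsum (S K) (fun q => alpha a x y (S i) q ^ 2 * hf f (S i) q))).
    { apply rsum_le; intro i. simpl alpha.
      rewrite (rsum_ext (S K) _ (fun q => hf f (S i) q)) by (intro; ring).
      apply rsum_mono_n; [intro; apply hf_pos | lia]. }
    lra.
  - unfold sq.
    apply Rle_trans with (rsum K (fun p => rsum (S K) (fun q => beta a x y p q ^ 2 * hf g p q))).
    + apply rsum_le; intro i. rewrite rsum_shift. cbv beta.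
      rewrite (rsum_ext K (fun i0 => beta a x y i (S i0) ^ 2 * hf g i (S i0)) (fun m => hf g i (S m)))
        by (intro; rewrite (beta_S1 a x y); ring).
      pose proof (hf_pos g i 0%nat). pose proof (pow2_ge_0 (beta a x y i 0)). nra.
    + apply rsum_mono_n; [|lia]. intro; apply rsum_nonneg; intro.
      pose proof (hf_pos g i i0). pose proof (pow2_ge_0 (beta a x y i i0)). nra.
Qed.

Lemma rho_lb (a x y : R) (Ha : 0 < a < 1) (Hx : 0 < x < 1) (Hy : 0 < y < 1) (Hayx : a * y < x) (f g : vec) K : rsum K (fun i => DD a x y f g i K) + rsum K (fun m => DD a x y f g K m)
   <= sq (S K) (rho a x y f g).
Proof.
  assert (E : sq (S K) (rho a x y f g) =
    sq (S K) (fun p q => alpha a x y p q ^ 2 * hf f p q + beta a x y p q ^ 2 * hf g p q)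
    + sq (S K) (fun p q => match p with O => 0 | S i => DD a x y f g i q end)
    + sq (S K) (fun p q => match q with O => 0 | S m => DD a x y f g p m end)).
  { rewrite <- !sq_plus. reflexivity. }
  rewrite E, L_X2, L_X3. pose proof (U_lb a x y f g K).
  assert (0 <= sq K (fun i m => hf f (S i) m + hf g i (S m) + 2 * DD a x y f g i m)).
  { apply sq_nonneg; intros; apply (DD_pos a x y Ha Hx Hy Hayx f g). }
  rewrite !sq_plus in H0.
  replace (sq K (fun p q => 2 * DD a x y f g p q)) with (sq K (DD a x y f g) + sq K (DD a x y f g)) in H0.
  - lra.
  - rewrite <- sq_plus. unfold sq; apply rsum_ext; intro; apply rsum_ext; intro; ring.
Qed.

Lemma iota_eq (a x y : R) (f g : vec) K : sq (S K) (iota a x y f g) =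
  rsum K (fun i => EE a x y f g i K) - rsum K (fun m => EE a x y f g K m).
Proof. unfold iota. rewrite sq_minus, L_X2, L_X3. ring. Qed.


Lemma lim_C (s : nat -> C) (a b : R) :
  is_lim_seq (fun n => Re (s n)) a -> is_lim_seq (fun n => Im (s n)) b ->
  filterlim s eventually (locally ((a,b) : C)).
Proof.
  intros Ha Hb.
  apply filterlim_ext with (fun n => (Re (s n), Im (s n))).
  { intro n. destruct (s n); reflexivity. }
  eapply filterlim_filter_le_2; [| apply (filterlim_pair _ _ (G := locally a) (H := locally b)); [exact Ha | exact Hb]].
  intros P [eps HP].
  exists (ball a eps) (ball b eps).
  - exists eps; auto.
  - exists eps; auto.
  - intros u v Hu Hv. apply HP. split; assumption.
Qed.

Lemma Rabs_le_inv z b : Rabs z <= b -> - b <= z <= b.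
Proof. intro H. pose proof (Rle_abs z). pose proof (Rle_abs (- z)). rewrite Rabs_Ropp in *. lra. Qed.

Theorem lemma3p14 (a x y : R) :
  0 < a < 1 -> 0 < x < 1 -> 0 < y < 1 -> a * y < x ->
  positive_L a x y.
Proof.
  intros Ha Hx Hy Hayx f g [Mf HMf] [Mg HMg].
  change (forall N, sq N (hf f) <= Mf) in HMf.
  change (forall N, sq N (hf g) <= Mg) in HMg.
  pose proof (hf_pos f) as Pf. pose proof (hf_pos g) as Pg.
  set (eps K := Dl (hf f) K + Dl (hf f) (S K) + Dl (hf g) K + Dl (hf g) (S K)).
  assert (Heps : is_lim_seq eps 0).
  { pose proof (Dl_lim _ Pf _ HMf) as L1. pose proof (Dl_lim _ Pg _ HMg) as L2.
    pose proof (proj1 (is_lim_seq_incr_1 _ _) L1) as L1'.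
    pose proof (proj1 (is_lim_seq_incr_1 _ _) L2) as L2'.
    replace (Finite 0) with (Finite (0 + 0 + 0 + 0)) by (f_equal; ring).
    unfold eps. repeat apply is_lim_seq_plus'; assumption. }
  set (s N := ip_partial N (Lop a x y (f, g)) (f, g)).
  assert (Hbd : forall K, Rabs (rsum K (fun i => DD a x y f g i K) + rsum K (fun m => DD a x y f g K m)) <= eps K).
  { intro K. eapply Rle_trans; [apply Rabs_triang|].
    eapply Rle_trans; [apply Rplus_le_compat; apply rsum_abs|].
    eapply Rle_trans; [apply Rplus_le_compat; apply rsum_le; intro; apply DD_abs; assumption|].
    rewrite !rsum_plus.
    pose proof (B1 _ Pg K). pose proof (B2 _ Pf K). pose proof (B3 _ Pg K). pose proof (B4 _ Pf K).
    assert (rsum K (hf f (S K)) = rsum K (fun m => hf f (S K) m)) by reflexivity.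
    unfold eps. lra. }
  assert (Hbe : forall K, Rabs (rsum K (fun i => EE a x y f g i K) - rsum K (fun m => EE a x y f g K m)) <= eps K).
  { intro K. unfold Rminus. eapply Rle_trans; [apply Rabs_triang|]. rewrite Rabs_Ropp.
    eapply Rle_trans; [apply Rplus_le_compat; apply rsum_abs|].
    eapply Rle_trans; [apply Rplus_le_compat; apply rsum_le; intro; apply EE_abs; assumption|].
    rewrite !rsum_plus.
    pose proof (B1 _ Pg K). pose proof (B2 _ Pf K). pose proof (B3 _ Pg K). pose proof (B4 _ Pf K).
    assert (rsum K (hf f (S K)) = rsum K (fun m => hf f (S K) m)) by reflexivity.
    unfold eps. lra. }
  assert (HIm : is_lim_seq (fun N => Im (s N)) 0).
  { apply is_lim_seq_incr_1.
    apply is_lim_seq_le_le with (u := fun K => - eps K) (w := eps); [| |exact Heps].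
    - intro K. unfold s. rewrite Im_ip, iota_eq by assumption.
      specialize (Hbe K). apply Rabs_le_inv in Hbe. lra.
    - replace (Finite 0) with (Rbar_opp (Finite 0)) by (simpl; f_equal; ring).
      apply -> is_lim_seq_opp. exact Heps. }
  assert (Hrho : forall p q, Rabs (rho a x y f g p q) <=
     hf f p q + hf g p q + (hf g (pred p) (S q) + hf f p q) + (hf g p q + hf f (S p) (pred q))).
  { clear Hbd Hbe HIm. clearbody eps s. intros p q. unfold rho.
    eapply Rle_trans; [apply Rabs_triang|]. apply Rplus_le_compat.
    eapply Rle_trans; [apply Rabs_triang|]. apply Rplus_le_compat.
    eapply Rle_trans; [apply Rabs_triang|]. apply Rplus_le_compat.
    - assert (0 <= alpha a x y p q <= 1) by (eapply w_alpha; eauto). rewrite Rabs_pos_eq.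
      + specialize (Pf p q).
        assert (alpha a x y p q ^ 2 <= 1) by (replace (alpha a x y p q ^ 2) with (alpha a x y p q * alpha a x y p q) by ring;
           replace 1 with (1*1) by ring; apply Rmult_le_compat; lra).
        assert (0 <= (1 - alpha a x y p q ^ 2) * hf f p q) by (apply Rmult_le_pos; lra).
        lra.
      + apply Rmult_le_pos; [apply pow2_ge_0| auto].
    - assert (0 <= beta a x y p q <= 1) by (eapply w_beta; eauto). rewrite Rabs_pos_eq.
      + specialize (Pg p q).
        assert (beta a x y p q ^ 2 <= 1) by (replace (beta a x y p q ^ 2) with (beta a x y p q * beta a x y p q) by ring;
           replace 1 with (1*1) by ring; apply Rmult_le_compat; lra).
        assert (0 <= (1 - beta a x y p q ^ 2) * hf g p q) by (apply Rmult_le_pos; lra).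
        lra.
      + apply Rmult_le_pos; [apply pow2_ge_0| auto].
    - destruct p.
      + rewrite Rabs_R0. specialize (Pg 0%nat (S q)). specialize (Pf 0%nat q). cbn [pred]. lra.
      + apply DD_abs; assumption.
    - destruct q.
      + rewrite Rabs_R0. specialize (Pg p 0%nat). specialize (Pf (S p) 0%nat). cbn [pred]. lra.
      + apply DD_abs; assumption. }
  assert (Hex : ex_finite_lim_seq (fun N => sq N (rho a x y f g))).
  { apply abs_conv with (2*Mf + 2*Mg + 2*Mg + 2*Mf).
    intro N. eapply Rle_trans; [apply sq_le; exact Hrho|].
    rewrite !sq_plus.
    pose proof (sq_shift_a N (hf g) Pg). pose proof (sq_shift_b N (hf f) Pf).
    pose proof (HMf N). pose proof (HMg N). pose proof (HMf (S N)). pose proof (HMg (S N)).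
    lra. }
  destruct Hex as [lr Hlr].
  exists ((lr, 0) : C). split; [|split].
  - apply lim_C; [|exact HIm].
    eapply is_lim_seq_ext; [|exact Hlr]. intro N. unfold s. rewrite Re_ip. reflexivity.
  - reflexivity.
  - simpl.
    assert (Hl2 : is_lim_seq (fun K => sq (S K) (rho a x y f g)) lr) by (apply is_lim_seq_incr_1 in Hlr; exact Hlr).
    assert (Hm : is_lim_seq (fun K => - eps K) 0).
    { replace (Finite 0) with (Rbar_opp (Finite 0)) by (simpl; f_equal; ring).
      apply -> is_lim_seq_opp. exact Heps. }
    assert (Hpt : forall K, - eps K <= sq (S K) (rho a x y f g)).
    { intro K.
      assert (rsum K (fun i => DD a x y f g i K) + rsum K (fun m => DD a x y f g K m)
         <= sq (S K) (rho a x y f g)) by (eapply rho_lb; eauto).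
      specialize (Hbd K). apply Rabs_le_inv in Hbd. clearbody eps s. lra. }
    exact (is_lim_seq_le _ _ _ _ Hpt Hm Hl2).
Qed.
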